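(* Let $F$ be an algebraically closed field. (i) If $\mathrm{char}\,F\ne2$, then the $1$-dimensional maximal Mathieu subspaces of $M_2(F)$ are exactly the subspaces $F(I_2+c)$ with $c\in M_2(F)$ nonzero and nilpotent. (ii) If $\mathrm{char}\,F=2$, then $M_2(F)$ has no $1$-dimensional maximal Mathieu subspace.
   Context: Let $\mathcal A$ be an associative algebra over a field $F$. An $F$-subspace $M\subseteq\mathcal A$ is a Mathieu subspace (MS) of $\mathcal A$ if for all $a,b,c\in\mathcal A$ such that $a^m\in M$ for all $m\ge 1$, there exists $N$ (depending on $a,b,c$) such that $ba^mc\in M$ for all $m\ge N$. A maximal MS of $\mathcal A$ is a proper MS of $\mathcal A$ that is not properly contained in any proper MS of $\mathcal A$. *)

(* Defs.v *)
From HB Require Import structures.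
From mathcomp Require Import all_boot all_order all_algebra.
Set Implicit Arguments. Unset Strict Implicit. Unset Printing Implicit Defensive.
Import Order.TTheory GRing.Theory Num.Theory.
Local Open Scope ring_scope.

Definition mathieu_subspace (F : fieldType) (n : nat) (M : {vspace 'M[F]_n.+1}) : Prop :=
  forall a b c : 'M[F]_n.+1,
    (forall m : nat, (1 <= m)%N -> a ^+ m \in M) ->
    exists N : nat, forall m : nat, (N <= m)%N -> b * a ^+ m * c \in M.

Definition maximal_mathieu_subspace (F : fieldType) (n : nat) (M : {vspace 'M[F]_n.+1}) : Prop :=
  [/\ mathieu_subspace M, M != fullv &
     forall N : {vspace 'M[F]_n.+1},
       mathieu_subspace N -> N != fullv -> (M <= N)%VS -> N = M].

Definition nilpotent_mx (F : fieldType) (n : nat) (c : 'M[F]_n.+1) : Prop :=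
  exists k : nat, c ^+ k = 0.

(* Main.v *)
Require Import Defs.
From HB Require Import structures.
From mathcomp Require Import all_boot all_order all_algebra.
From mathcomp Require Import ring.
Import GRing.Theory.
Local Open Scope ring_scope.
Set Implicit Arguments. Unset Strict Implicit. Unset Printing Implicit Defensive.

Section S.
Variable F : fieldType.
Definition i0 : 'I_2 := @Ordinal 2 0 isT.
Definition i1 : 'I_2 := @Ordinal 2 1 isT.
Lemma ord2P (i : 'I_2) : i = i0 \/ i = i1.
Proof. case: i => [[|[|//]] H]; [left|right]; exact: val_inj. Qed.
Lemma mul2E (x y : 'M[F]_2) i j : (x * y) i j = x i i0 * y i0 j + x i i1 * y i1 j.
Proof.
rewrite -mulmxE mxE big_ord_recl big_ord_recl big_ord0 addr0.
by congr (_ * _ + _ * _); congr (_ _ _); apply: val_inj.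
Qed.
Lemma one2E i j : (1 : 'M[F]_2) i j = (i == j)%:R.
Proof. by rewrite -idmxE mxE. Qed.
Definition tr2 (x : 'M[F]_2) := x i0 i0 + x i1 i1.
Definition det2 (x : 'M[F]_2) := x i0 i0 * x i1 i1 - x i0 i1 * x i1 i0.

Lemma mx2eq (x y : 'M[F]_2) : x i0 i0 = y i0 i0 -> x i0 i1 = y i0 i1 ->
  x i1 i0 = y i1 i0 -> x i1 i1 = y i1 i1 -> x = y.
Proof.
move=> h00 h01 h10 h11; apply/matrixP => i j.
by case: (ord2P i) => ->; case: (ord2P j) => ->.
Qed.
Ltac mx2 := apply: mx2eq; rewrite ?mul2E ?one2E ?mxE ?one2E /tr2 /det2 /=.

Lemma CH (x : 'M[F]_2) : x * x = tr2 x *: x - det2 x *: 1.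
Proof. mx2; ring. Qed.
Lemma det2M x y : det2 (x * y) = det2 x * det2 y.
Proof. rewrite /det2 !mul2E; ring. Qed.
Lemma tr2_lin a b x y : tr2 (a *: x + b *: y) = a * tr2 x + b * tr2 y.
Proof. rewrite /tr2 !mxE; ring. Qed.
Lemma det2_lin a b x y : det2 (a *: x + b *: y) =
  a ^+ 2 * det2 x + a * b * (tr2 x * tr2 y - tr2 (x * y)) + b ^+ 2 * det2 y.
Proof. rewrite /det2 /tr2 !mul2E !mxE; ring. Qed.
Lemma tr2_1 : tr2 (1 : 'M[F]_2) = 2.
Proof. by rewrite /tr2 !one2E. Qed.
Lemma det2_1 : det2 (1 : 'M[F]_2) = 1.
Proof. by rewrite /det2 !one2E /=; ring. Qed.
Lemma tr2Z a x : tr2 (a *: x) = a * tr2 x.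
Proof. rewrite /tr2 !mxE; ring. Qed.
Lemma det2Z a x : det2 (a *: x) = a ^+ 2 * det2 x.
Proof. rewrite /det2 !mxE; ring. Qed.
Lemma tr2D x y : tr2 (x + y) = tr2 x + tr2 y.
Proof. rewrite /tr2 !mxE; ring. Qed.
Lemma tr2_0 : tr2 (0 : 'M[F]_2) = 0.
Proof. by rewrite /tr2 !mxE addr0. Qed.

Lemma one2_neq0 : (1 : 'M[F]_2) != 0.
Proof. by apply/eqP => /matrixP /(_ i0 i0); rewrite one2E mxE /= => /eqP; rewrite oner_eq0. Qed.

Lemma scal1_sq (m : F) : (m *: (1 : 'M[F]_2)) * (m *: 1) = (m * m) *: 1.
Proof. by rewrite -scalerAl mul1r scalerA. Qed.

Lemma idem2 x : x * x = x -> x != 0 -> x = 1 \/ (tr2 x = 1 /\ det2 x = 0).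
Proof.
move=> hx nz; have := CH x; rewrite hx => e.
have e2 : (tr2 x - 1) *: x = det2 x *: 1.
  by rewrite scalerBl scale1r {3}e opprB addrC subrK.
have [t1|t1] := eqVneq (tr2 x) 1.
  right; split => //; move: e2; rewrite t1 subrr scale0r => /esym/eqP.
  by rewrite scaler_eq0 (negbTE one2_neq0) orbF => /eqP.
left; set m := det2 x / (tr2 x - 1).
have xm : x = m *: 1.
  by rewrite /m mulrC -scalerA -e2 scalerA mulVf ?scale1r // subr_eq0.
move: hx nz; rewrite xm scal1_sq => /eqP; rewrite -subr_eq0 -scalerBl scaler_eq0.
rewrite (negbTE one2_neq0) orbF scaler_eq0 (negbTE one2_neq0) orbF => h mnz.
have : m * (m - 1) == 0 by rewrite mulrBr mulr1.
by rewrite mulf_eq0 (negbTE mnz) /= subr_eq0 => /eqP ->; rewrite scale1r.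
Qed.

Lemma idem2' x : tr2 x = 1 -> det2 x = 0 -> x * x = x /\ x != 0.
Proof.
move=> t d; split; first by rewrite CH t d scale1r scale0r subr0.
by apply/eqP => x0; move: t; rewrite x0 tr2_0 => /eqP; rewrite eq_sym oner_eq0.
Qed.

Definition idemfree (N : {vspace 'M[F]_2}) := forall x, x \in N -> x * x = x -> x = 0.

Lemma idemfree_1 N : idemfree N -> 1 \notin N.
Proof. by move=> h; apply/negP => /h /(_ (mulr1 _)) /eqP; rewrite (negbTE one2_neq0). Qed.

Lemma idemfree_det0 N y : idemfree N -> y \in N -> det2 y = 0 -> tr2 y = 0.
Proof.
move=> h yN d; apply/eqP/negPn/negP => t.
have [e1 e2] : ((tr2 y)^-1 *: y) * ((tr2 y)^-1 *: y) = (tr2 y)^-1 *: y /\ (tr2 y)^-1 *: y != 0.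
  by apply: idem2'; rewrite ?tr2Z ?det2Z ?d ?mulr0 // mulVf.
by move/eqP: e2; apply; apply: h => //; rewrite memvZ.
Qed.

Lemma powS_idem (e : 'M[F]_2) m : e * e = e -> e ^+ m.+1 = e.
Proof. move=> h; elim: m => [|m ih]; first by rewrite expr1. by rewrite exprS ih h. Qed.

Lemma ms_of_idemfree (N : {vspace 'M[F]_2}) : idemfree N -> mathieu_subspace N.
Proof.
move=> h a b c ha.
have a1 : a \in N by have := ha 1%N isT; rewrite expr1.
have a2 : a * a \in N by have := ha 2%N isT; rewrite expr2.
suff aa : a * a = 0.
  exists 2%N => m hm; rewrite -(subnK hm) exprD expr2 aa !mulr0 mul0r; exact: mem0v.
have e := CH a.
have [d0|dn] := eqVneq (det2 a) 0.
  have [t0|tn] := eqVneq (tr2 a) 0; first by rewrite e t0 d0 !scale0r subr0.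
  have aa : a * a = tr2 a *: a by rewrite e d0 scale0r subr0.
  have := h ((tr2 a)^-1 *: a) (memvZ _ a1).
  rewrite -scalerAl -scalerAr scalerA aa scalerA.
  rewrite -mulrA mulVf // mulr1 => /(_ erefl) /eqP; rewrite scaler_eq0 invr_eq0 (negbTE tn) /= => /eqP a0.
  by rewrite a0 scaler0.
exfalso; have : 1 \in N.
  have -> : 1 = (det2 a)^-1 *: (tr2 a *: a - a * a).
    by rewrite e opprB addrC subrK scalerA mulVf // scale1r.
  by rewrite memvZ // memvB // memvZ.
by apply/negP; apply: idemfree_1.
Qed.

Lemma delta_mid (e : 'M[F]_2) k i j l :
  delta_mx k i * e * delta_mx j l = e i j *: delta_mx k l.
Proof.
by case: (ord2P k)=>->; case: (ord2P i)=>->; case: (ord2P j)=>->; case: (ord2P l)=>->;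
  mx2; rewrite ?mul2E ?mxE /=; ring.
Qed.
Lemma full_of_idem (N : {vspace 'M[F]_2}) e : mathieu_subspace N -> e \in N -> e * e = e -> e != 0 -> N = fullv.
Proof.
move=> ms eN ee nz.
have hb : forall b c, b * e * c \in N.
  move=> b c.
  have ha : forall m, (1 <= m)%N -> e ^+ m \in N.
    by move=> m hm; rewrite -(prednK hm) powS_idem.
  have [N0 HN] := ms e b c ha.
  by have := HN N0.+1 (leqnSn _); rewrite powS_idem.
have : ~~ [forall i, forall j, e i j == 0].
  apply: contraNN nz => /forallP h; apply/eqP/matrixP => i j; rewrite mxE; apply/eqP.
  exact: (forallP (h i) j).
case/forallPn => i /forallPn [j eij].
apply/eqP; rewrite eqEsubv subvf /=; apply/subvP => x _.
rewrite [x]matrix_sum_delta; apply: memv_suml => k _; apply: memv_suml => l _.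
apply: memvZ.
have -> : delta_mx k l = (e i j)^-1 *: (delta_mx k i * e * delta_mx j l).
  by rewrite delta_mid scalerA mulVf // scale1r.
by apply: memvZ.
Qed.

Definition maxprop (M : {vspace 'M[F]_2}) :=
  idemfree M /\ (forall N, idemfree N -> (M <= N)%VS -> N = M).

Lemma idemfree_of_ms (N : {vspace 'M[F]_2}) : mathieu_subspace N -> N != fullv -> idemfree N.
Proof.
move=> ms nf x xN xx; apply/eqP/negPn/negP => nz.
by move: nf; rewrite (full_of_idem ms xN xx nz) eqxx.
Qed.

Lemma idemfree_nfull N : idemfree N -> N != fullv.
Proof. by move=> h; apply/eqP => NF; move: (idemfree_1 h); rewrite NF memvf. Qed.

Lemma maxP (M : {vspace 'M[F]_2}) : maximal_mathieu_subspace M <-> maxprop M.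
Proof.
split.
  case=> ms nf mx; split; first exact: idemfree_of_ms.
  move=> N hN sub; apply: mx => //; [exact: ms_of_idemfree | exact: idemfree_nfull].
case=> h mx; split; [exact: ms_of_idemfree | exact: idemfree_nfull |].
by move=> N ms nf sub; apply: mx => //; apply: idemfree_of_ms.
Qed.

Lemma nilp_sq (c : 'M[F]_2) : nilpotent_mx c -> c * c = 0.
Proof.
case=> [[|k] ck]; first by move/eqP: ck; rewrite expr0 (negbTE one2_neq0).
have dk : forall n, det2 (c ^+ n) = det2 c ^+ n.
  elim=> [|n ih]; first by rewrite !expr0 det2_1.
  by rewrite !exprS det2M ih.
have d0 : det2 c = 0.
  have : det2 c ^+ k.+1 == 0 by rewrite -dk ck /det2 !mxE; apply/eqP; ring.
  by rewrite expf_eq0 => /andP [_ /eqP].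
have cc : c * c = tr2 c *: c by rewrite CH d0 scale0r subr0.
have pk : forall n, c ^+ n.+1 = tr2 c ^+ n *: c.
  elim=> [|n ih]; first by rewrite expr1 expr0 scale1r.
  by rewrite exprS ih -scalerAr cc scalerA exprS mulrC.
move: ck; rewrite pk => /eqP; rewrite scaler_eq0 expf_eq0 => /orP [/andP [_ /eqP t0]|/eqP ->].
  by rewrite cc t0 scale0r.
by rewrite mul0r.
Qed.

Lemma sq0 (c : 'M[F]_2) : c * c = 0 -> c != 0 -> tr2 c = 0 /\ det2 c = 0.
Proof.
move=> cc nz; have := CH c; rewrite cc => /eqP; rewrite eq_sym subr_eq0 => /eqP e.
have [t0|tn] := eqVneq (tr2 c) 0.
  split=> //; move: e; rewrite t0 scale0r => /esym/eqP.
  by rewrite scaler_eq0 (negbTE one2_neq0) orbF => /eqP.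
exfalso; set m := det2 c / tr2 c.
have cm : c = m *: 1 by rewrite /m mulrC -scalerA -e scalerA mulVf ?scale1r.
move: cc nz; rewrite cm scal1_sq => /eqP; rewrite scaler_eq0 (negbTE one2_neq0) orbF.
by rewrite mulf_eq0 orbb scaler_eq0 (negbTE one2_neq0) orbF => ->.
Qed.

Lemma sq0' c : tr2 c = 0 -> det2 c = 0 -> c * c = 0.
Proof. by move=> t d; rewrite CH t d !scale0r subr0. Qed.

Lemma isoF (a b e p q s : F) :
  (a != 0) || (b != 0) || (e != 0) ->
  a * - a - b * e = 0 -> p * - p - q * s = 0 -> a * p + b * s + (e * q + - a * - p) = 0 ->
  exists mu, [/\ p = mu * a, q = mu * b & s = mu * e].
Proof.
move=> nz dc dx t.
have [b0|bn] := eqVneq b 0.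
  have a0 : a = 0.
    apply/eqP; rewrite -sqrf_eq0; apply/eqP.
    have -> : a ^+ 2 = - (a * - a - b * e) by rewrite b0; ring.
    by rewrite dc oppr0.
  have en : e != 0 by move: nz; rewrite a0 b0 eqxx.
  have q0 : q = 0.
    have : e * q == 0 by apply/eqP; rewrite -t a0 b0; ring.
    by rewrite mulf_eq0 (negbTE en) => /eqP.
  have p0 : p = 0.
    apply/eqP; rewrite -sqrf_eq0; apply/eqP.
    have -> : p ^+ 2 = - (p * - p - q * s) by rewrite q0; ring.
    by rewrite dx oppr0.
  exists (s / e); split; [by rewrite a0 p0 mulr0| by rewrite b0 q0 mulr0| by rewrite mulfVK].
have h1 : b * p = a * q.
  apply/eqP; rewrite -subr_eq0 -sqrf_eq0; apply/eqP.
  have -> : (b * p - a * q) ^+ 2 = - b^+2 * (p * - p - q * s) - (b * q) * (a * p + b * s + (e * q + - a * - p)) - q ^+2 * (a * - a - b * e) by ring.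
  by rewrite dc dx t !mulr0 !subr0.
have h2 : b * s = e * q.
  apply: (mulfI bn); apply/eqP; rewrite -subr_eq0; apply/eqP.
  have -> : b * (b * s) - b * (e * q) = b * (a * p + b * s + (e * q + - a * - p)) - 2 * a * (b * p - a * q) + 2 * q * (a * - a - b * e) by ring.
  by rewrite dc t h1 subrr !mulr0 subr0 addr0.
exists (q / b); split.
- by apply: (mulfI bn); rewrite h1; field.
- by rewrite mulfVK.
- by apply: (mulfI bn); rewrite h2; field.
Qed.

Lemma iso (c x : 'M[F]_2) : c != 0 -> tr2 c = 0 -> det2 c = 0 -> tr2 x = 0 -> det2 x = 0 ->
  tr2 (c * x) = 0 -> exists mu, x = mu *: c.
Proof.
move=> nz tc dc tx dx tcx.
have ec : c i1 i1 = - c i0 i0 by apply/eqP; rewrite -addr_eq0 addrC; apply/eqP.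
have ex : x i1 i1 = - x i0 i0 by apply/eqP; rewrite -addr_eq0 addrC; apply/eqP.
move: dc dx tcx; rewrite /det2 /tr2 !mul2E ec ex => dc dx tcx.
have nz' : (c i0 i0 != 0) || (c i0 i1 != 0) || (c i1 i0 != 0).
  apply: contraNT nz; rewrite !negb_or !negbK => /andP [/andP [/eqP h1 /eqP h2] /eqP h3].
  by apply/eqP; mx2; rewrite ?ec ?h1 ?h2 ?h3 ?oppr0.
have [mu [h1 h2 h3]] := isoF nz' dc dx tcx.
by exists mu; mx2; rewrite ?ex ?ec ?h1 ?h2 ?h3 // mulrN.
Qed.
Definition E12 : 'M[F]_2 := delta_mx i0 i1.
Definition E21 : 'M[F]_2 := delta_mx i1 i0.

Lemma idemfree_addP v w :
  (forall a b, a *: v + b *: w <> 1 /\ ~ (tr2 (a *: v + b *: w) = 1 /\ det2 (a *: v + b *: w) = 0)) ->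
  idemfree (<[v]> + <[w]>)%VS.
Proof.
move=> h x /memv_addP [y /vlineP [a ->] [z /vlineP [b ->] ->]] xx.
apply/eqP/negPn/negP => nz; have [h1 h2] := h a b.
by case: (idem2 xx nz).
Qed.

Lemma entry (x y : 'M[F]_2) i j : x = y -> x i j = y i j.
Proof. by move=> ->. Qed.

Lemma vline_absurd (P : Prop) (v : 'M[F]_2) (ext : exists w, w \notin <[v]>%VS /\ idemfree (<[v]> + <[w]>)%VS) :
  maxprop <[v]>%VS -> P.
Proof.
case: ext => w [wn hw] [_ mx]; exfalso.
have e := mx _ hw (addvSl _ _).
by move: wn; rewrite -e; have /subvP := addvSr <[v]>%VS <[w]>%VS; move/(_ w (memv_line w)) => ->.
Qed.

Lemma caseA v : tr2 v = 0 -> 1 \notin <[v]>%VS ->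
  exists w, w \notin <[v]>%VS /\ idemfree (<[v]> + <[w]>)%VS.
Proof.
move=> tv n1.
have ev : v i1 i1 = - v i0 i0 by apply/eqP; rewrite -addr_eq0 addrC; apply/eqP.
have trE12 : tr2 E12 = 0 by rewrite /tr2 /E12 !mxE /= addr0.
have trE21 : tr2 E21 = 0 by rewrite /tr2 /E21 !mxE /= addr0.
have trx : forall a b w, tr2 w = 0 -> tr2 (a *: v + b *: w) != 1.
  by move=> a b w tw; rewrite tr2_lin tv tw !mulr0 addr0 eq_sym oner_eq0.
have [bn|b0] := eqVneq (v i0 i1) 0; last first.
  exists E21; split.
    apply/negP => /vlineP [l e].
    have := entry i0 i1 e; rewrite /E21 !mxE /= => /esym/eqP; rewrite mulf_eq0 (negbTE b0) orbF => /eqP l0.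
    by have := entry i1 i0 e; rewrite /E21 !mxE /= l0 mul0r => /eqP; rewrite oner_eq0.
  apply: idemfree_addP => a b; split; last by case=> /eqP; rewrite (negbTE (trx _ _ _ trE21)).
  move=> e; have := entry i0 i1 e; rewrite /E21 !mxE ?one2E /= mulr0 addr0 => /eqP.
  rewrite mulf_eq0 (negbTE b0) orbF => /eqP a0.
  by have := entry i0 i0 e; rewrite /E21 !mxE ?one2E /= a0 mul0r mulr0 addr0 => /eqP; rewrite eq_sym oner_eq0.
have [en|e0] := eqVneq (v i1 i0) 0; last first.
  exists E12; split.
    apply/negP => /vlineP [l e].
    have := entry i1 i0 e; rewrite /E12 !mxE /= => /esym/eqP; rewrite mulf_eq0 (negbTE e0) orbF => /eqP l0.
    by have := entry i0 i1 e; rewrite /E12 !mxE /= l0 mul0r => /eqP; rewrite oner_eq0.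
  apply: idemfree_addP => a b; split; last by case=> /eqP; rewrite (negbTE (trx _ _ _ trE12)).
  move=> e; have := entry i1 i0 e; rewrite /E12 !mxE ?one2E /= mulr0 addr0 => /eqP.
  rewrite mulf_eq0 (negbTE e0) orbF => /eqP a0.
  by have := entry i0 i0 e; rewrite /E12 !mxE ?one2E /= a0 mul0r mulr0 addr0 => /eqP; rewrite eq_sym oner_eq0.
exists E12; split.
  apply/negP => /vlineP [l e].
  by have := entry i0 i1 e; rewrite /E12 !mxE /= bn mulr0 => /eqP; rewrite oner_eq0.
apply: idemfree_addP => a b; split; last by case=> /eqP; rewrite (negbTE (trx _ _ _ trE12)).
move=> e; apply/negP: n1; apply/negPn/vlineP; exists a.
have h00 := entry i0 i0 e; have h11 := entry i1 i1 e.
move: h00 h11; rewrite /E12 !mxE ?one2E /= !mulr0 !addr0 ev mulrN => h00 h11.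
by mx2; rewrite ?ev ?bn ?en ?mulr0 // mulrN h11.
Qed.
End S.
Section C.
Variable F : closedFieldType.

Lemma root2 (B C : F) : exists r, r ^+ 2 + B * r + C = 0.
Proof.
have [x hx] := @solve_monicpoly F 2 (nth 0 [:: - C; - B]) isT.
exists x; move: hx; rewrite !big_ord_recl big_ord0 /= expr0 expr1 mulr1 addr0 => ->.
ring.
Qed.

Lemma dim1 (M : {vspace 'M[F]_2}) : \dim M = 1%N -> exists v, v != 0 /\ M = <[v]>%VS.
Proof.
move=> d; have Mn : M != 0%VS by rewrite -dimv_eq0 d.
have vn : vpick M != 0 by rewrite vpick0.
exists (vpick M); split => //; apply/eqP; rewrite eq_sym eqEdim -memvE memv_pick.
by rewrite d dim_vline vn.
Qed.

Lemma vlineZ (k : F) (v : 'M[F]_2) : k != 0 -> <[k *: v]>%VS = <[v]>%VS.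
Proof.
move=> kn; have [->|vn] := eqVneq v 0; first by rewrite scaler0.
apply/eqP; rewrite eqEdim -memvE memvZ ?memv_line //= !dim_vline vn.
by rewrite scaler_eq0 negb_or kn vn.
Qed.

Lemma caseC (v : 'M[F]_2) : det2 v != 0 -> tr2 v ^+ 2 != 4 * det2 v ->
  exists w, w \notin <[v]>%VS /\ idemfree (<[v]> + <[w]>)%VS.
Proof.
move=> dn t4.
have [x [y [hr nz]]] : exists x y, v i1 i0 * x ^+ 2 + (v i1 i1 - v i0 i0) * x * y - v i0 i1 * y ^+ 2 = 0
    /\ ((x != 0) || (y != 0)).
  have [e0|en] := eqVneq (v i1 i0) 0.
    by exists 1, 0; split; [rewrite e0; ring | rewrite oner_eq0].
  have [r hr] := root2 ((v i1 i1 - v i0 i0) / v i1 i0) (- (v i0 i1 / v i1 i0)).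
  exists r, 1; split; last by rewrite oner_eq0 orbT.
  apply: (mulfI (invr_neq0 en)); rewrite mulr0 -hr; field.
  done.
pose w : 'M[F]_2 := \matrix_(i, j) (if i == i0 then (if j == i0 then - (x * y) else x ^+ 2)
   else (if j == i0 then - y ^+ 2 else x * y)).
have tw : tr2 w = 0 by rewrite /tr2 !mxE /=; ring.
have dw : det2 w = 0 by rewrite /det2 !mxE /=; ring.
have tvw : tr2 (v * w) = 0 by rewrite /tr2 !mul2E !mxE /= -hr; ring.
have wn : w != 0.
  apply/eqP => w0; have h1 := entry i0 i1 w0; have h2 := entry i1 i0 w0.
  rewrite !mxE /= in h1 h2.
  have x0 : x = 0 by apply/eqP; rewrite -sqrf_eq0 h1.
  have y0 : y = 0 by apply/eqP; rewrite -sqrf_eq0 -oppr_eq0 h2.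
  by move: nz; rewrite x0 y0 eqxx.
exists w; split.
  apply/negP => /vlineP [l e]; move: (f_equal (@det2 F) e); rewrite det2Z dw => /esym/eqP.
  rewrite mulf_eq0 (negbTE dn) orbF sqrf_eq0 => /eqP l0.
  by move: wn; rewrite e l0 scale0r eqxx.
apply: idemfree_addP => a b.
have dx : det2 (a *: v + b *: w) = a ^+ 2 * det2 v.
  by rewrite det2_lin tw dw tvw; ring.
have tx : tr2 (a *: v + b *: w) = a * tr2 v by rewrite tr2_lin tw; ring.
split.
  move=> e; have := f_equal (@det2 F) e; have := f_equal (@tr2 F) e.
  rewrite dx tx tr2_1 det2_1 => e1 e2.
  apply/negP: t4; apply/negPn/eqP.
  have an : a != 0.
    by apply/eqP => a0; move: e2; rewrite a0 expr0n /= mul0r => /eqP; rewrite eq_sym oner_eq0.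
  apply: (mulfI (expf_neq0 2 an)).
  rewrite -exprMn e1 mulrCA e2; ring.
rewrite dx tx => -[e1 e2]; move/eqP: e2; rewrite mulf_eq0 (negbTE dn) orbF sqrf_eq0 => /eqP a0.
by move: e1; rewrite a0 mul0r => /eqP; rewrite eq_sym oner_eq0.
Qed.

Lemma shape (v : 'M[F]_2) : v != 0 -> maxprop <[v]>%VS ->
  [/\ tr2 v != 0, det2 v != 0 & tr2 v ^+ 2 = 4 * det2 v].
Proof.
move=> vn mp; have [h _] := mp.
have [t0|tn] := eqVneq (tr2 v) 0.
  exact: (@vline_absurd F _ v (caseA t0 (idemfree_1 h)) mp).
have [d0|dn] := eqVneq (det2 v) 0.
  by move: tn; rewrite (idemfree_det0 h (memv_line v) d0) eqxx.
have [//|t4] := eqVneq (tr2 v ^+ 2) (4 * det2 v).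
exact: (@vline_absurd F _ v (caseC dn t4) mp).
Qed.
End C.
Lemma pchar2 (F : fieldType) : (2%N \in [pchar F]) = ((2 : F) == 0).
Proof. by rewrite inE /=. Qed.

Unset Implicit Arguments.
Theorem corollary3p4 (F : closedFieldType) :
  (~~ (2%N \in [pchar F]) ->
     forall M : {vspace 'M[F]_2},
       (\dim M = 1%N /\ maximal_mathieu_subspace M) <->
       (exists c : 'M[F]_2, [/\ c != 0, nilpotent_mx c & M = <[1 + c]>%VS]))
  /\
  (2%N \in [pchar F] ->
     forall M : {vspace 'M[F]_2},
       \dim M = 1%N -> ~ maximal_mathieu_subspace M).
Proof.
have sh : forall M : {vspace 'M[F]_2}, \dim M = 1%N -> maximal_mathieu_subspace M ->
   exists v, [/\ M = <[v]>%VS, maxprop M, tr2 v != 0, det2 v != 0 & tr2 v ^+ 2 = 4 * det2 v].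
  move=> M d /maxP mp; have [v [vn Me]] := dim1 d.
  have [tn dn t4] := shape vn (eq_rect _ _ mp _ Me).
  by exists v; split.
split; last first.
  move=> c2 M d mm; rewrite pchar2 in c2.
  have [v [_ _ tn _ t4]] := sh M d mm.
  move: tn; rewrite -sqrf_eq0 t4 (_ : (4 : F) = 2 * 2); last by ring.
  by rewrite (eqP c2) !mul0r eqxx.
move=> c2 M; rewrite pchar2 in c2; split.
  case=> d mm; have [v [Me [h _] tn dn t4]] := sh M d mm.
  pose c := (2 / tr2 v) *: v + (-1) *: (1 : 'M[F]_2).
  have k : 2 / tr2 v != 0 by rewrite mulf_neq0 ?invr_eq0.
  have h1c : 1 + c = (2 / tr2 v) *: v by rewrite /c scaleN1r addrC subrK.
  have tc : tr2 c = 0 by rewrite /c tr2_lin tr2_1; field.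
  have four : (4 : F) != 0 by rewrite (_ : (4 : F) = 2 * 2) ?mulf_neq0 //; ring.
  have dE : det2 v = tr2 v ^+ 2 / 4 by rewrite t4; field.
  have dc : det2 c = 0.
    by rewrite /c det2_lin tr2_1 det2_1 !mulr1 dE; field; rewrite tn four.
  exists c; split.
  - apply/eqP => c0; move: (idemfree_1 h); rewrite Me -(vlineZ _ k) -h1c c0 addr0 memv_line.
    done.
  - by exists 2%N; rewrite expr2; apply: sq0'.
  - by rewrite h1c vlineZ.
case=> c [cn cnil ->].
have cc := nilp_sq cnil; have [tc dc] := sq0 cc cn.
set v := 1 + c.
have tv : tr2 v = 2 by rewrite /v tr2D tr2_1 tc addr0.
have dv : det2 v = 1.
  have -> : v = 1 *: 1 + 1 *: c by rewrite !scale1r.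
  by rewrite det2_lin tr2_1 det2_1 !mul1r tc dc; ring.
have vn : v != 0 by apply/eqP => v0; move: tv; rewrite v0 tr2_0 => /eqP; rewrite eq_sym (negbTE c2).
split; first by rewrite dim_vline vn.
apply/maxP; split.
  move=> x /vlineP [l ->] xx; apply/eqP/negPn/negP => nz.
  case: (idem2 xx nz).
    move=> e; have := f_equal (@tr2 F) e; rewrite tr2Z tv tr2_1 => e2.
    have l1 : l = 1 by apply: (mulIf c2); rewrite mul1r.
    by move: e; rewrite l1 scale1r /v => /eqP; rewrite -subr_eq0 addrC addKr => /eqP c0; move: cn; rewrite c0 eqxx.
  rewrite tr2Z det2Z tv dv mulr1 => -[e1 /eqP]; rewrite sqrf_eq0 => /eqP l0.
  by move: e1; rewrite l0 mul0r => /eqP; rewrite eq_sym oner_eq0.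
move=> N hN sub; apply: subv_anti; rewrite sub andbT; apply/subvP => w wN.
have vN : v \in N by move/subvP: sub; apply; apply: memv_line.
have [r hr] := root2 (tr2 v * tr2 w - tr2 (v * w)) (det2 w).
pose x0 := r *: v + 1 *: w.
have x0N : x0 \in N by rewrite memvD ?memvZ.
have dx0 : det2 x0 = 0 by rewrite det2_lin dv -hr; ring.
have tx0 := idemfree_det0 hN x0N dx0.
have tvx : tr2 (v * x0) = tr2 (c * x0) by rewrite /v mulrDl mul1r tr2D tx0 add0r.
have tcx : tr2 (c * x0) = 0.
  apply/eqP/negPn/negP => g.
  pose y := 1 *: v + (tr2 (c * x0))^-1 *: x0.
  have yN : y \in N by rewrite memvD ?memvZ.
  have dy : det2 y = 0 by rewrite det2_lin dv tv tx0 dx0 tvx; field.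
  have := idemfree_det0 hN yN dy; rewrite tr2_lin tv tx0 mulr0 addr0 mul1r.
  by move/eqP; rewrite (negbTE c2).
have [mu hmu] := iso cn tc dc tx0 dx0 tcx.
have [m0|mn] := eqVneq mu 0.
  have e0 : r *: v + 1 *: w = 0 by rewrite -/x0 hmu m0 scale0r.
  apply/vlineP; exists (-r); apply/eqP; rewrite scaleNr -addr_eq0 addrC -[w]scale1r e0.
  done.
exfalso.
have cN : c \in N by have := memvZ mu^-1 x0N; rewrite hmu scalerA mulVf // scale1r.
have := idemfree_1 hN; rewrite (_ : 1 = v - c) ?memvB //.
by rewrite /v addrK.
Qed.
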